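(* In the standing setting below, let $x'\in\mathbb{X}$ and $y_0,y_1\in\mathbb{Y}$ with $y_0\neq y_1$, and let $f_i(x)=-c(x,y_i)+c(x',y_i)$ for $i=0,1$. If $x'$ lies in the interior of $\mathbb{X}$, then the set $\{x\in\mathbb{X}: f_0(x)\le f_1(x)\}$ has non-empty interior.
   Context: Standing setting: $\mathbb{X},\mathbb{Y}\subset\mathbb{R}^n$ are compact with non-empty interior; $c:\mathbb{X}\times\mathbb{Y}\to\mathbb{R}$ has continuous $D_xc$, $D_yc$, and continuous mixed second derivatives with $D^2_{xy}c=(D^2_{yx}c)^T$; for each $x$ the map $y\mapsto -D_xc(x,y)$ is injective on $\mathbb{Y}$ and for each $y$ the map $x\mapsto -D_yc(x,y)$ is injective on $\mathbb{X}$; $D^2_{xy}c(x,y)$ is invertible everywhere; for every $y$ the set $\{-D_yc(x,y):x\in\mathbb{X}\}$ is convex and for every $x$ the set $\{-D_xc(x,y):y\in\mathbb{Y}\}$ is convex. *)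

(* Defs.v *)
From HB Require Import structures.
From mathcomp Require Import all_boot all_order all_algebra.
From mathcomp Require Import all_classical all_reals all_analysis.
Set Implicit Arguments. Unset Strict Implicit. Unset Printing Implicit Defensive.
Import Order.TTheory GRing.Theory Num.Theory.
Import numFieldNormedType.Exports.
Local Open Scope classical_set_scope.
Local Open Scope ring_scope.

Section Costs.
Variables (R : realType) (n : nat).
Notation V := 'rV[R]_n.

Definition ebas (i : 'I_n) : V := delta_mx 0 i.

Definition Dx (c : V -> V -> R) (x y : V) : V :=
  \row_i derive (fun t => c t y) x (ebas i).
Definition Dy (c : V -> V -> R) (x y : V) : V :=
  \row_i derive (fun t => c x t) y (ebas i).
Definition Dxy (c : V -> V -> R) (x y : V) : 'M[R]_n :=
  \matrix_(i, j) derive (fun t => Dx c x t 0 i) y (ebas j).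
Definition Dyx (c : V -> V -> R) (x y : V) : 'M[R]_n :=
  \matrix_(i, j) derive (fun t => Dy c t y 0 i) x (ebas j).

Definition XY (X Y : set V) : set (V * V) := [set p | X p.1 /\ Y p.2].

Definition standing_setting (X Y : set V) (c : V -> V -> R) : Prop :=
  compact X /\ compact Y /\ interior X !=set0 /\ interior Y !=set0 /\
   (forall x y, X x -> Y y ->
      differentiable (fun t => c t y) x /\ differentiable (fun t => c x t) y) /\
   {within XY X Y, continuous (fun p => Dx c p.1 p.2)} /\
   {within XY X Y, continuous (fun p => Dy c p.1 p.2)} /\
   (forall x y, X x -> Y y ->
      differentiable (fun t => Dx c x t) y /\ differentiable (fun t => Dy c t y) x) /\
   {within XY X Y, continuous (fun p => Dxy c p.1 p.2)} /\
   {within XY X Y, continuous (fun p => Dyx c p.1 p.2)} /\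
   (forall x y, X x -> Y y -> Dxy c x y = (Dyx c x y)^T) /\
   (forall x y1 y2, X x -> Y y1 -> Y y2 -> - Dx c x y1 = - Dx c x y2 -> y1 = y2) /\
   (forall y x1 x2, Y y -> X x1 -> X x2 -> - Dy c x1 y = - Dy c x2 y -> x1 = x2) /\
   (forall x y, X x -> Y y -> Dxy c x y \in unitmx) /\
   (forall y, Y y ->
      convex_set ([set - Dy c x y | x in X] : set (convex_lmodType V))) /\
   (forall x, X x ->
      convex_set ([set - Dx c x y | y in Y] : set (convex_lmodType V))).

End Costs.

(* Main.v *)
Require Import Defs.
From HB Require Import structures.
From mathcomp Require Import all_boot all_order all_algebra.
From mathcomp Require Import all_classical all_reals all_analysis.
Import Order.TTheory GRing.Theory Num.Theory.
Import numFieldNormedType.Exports.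
Local Open Scope classical_set_scope.
Local Open Scope ring_scope.

Lemma fermat_min (R : realType) (V : normedModType R) (g : V -> R) a v :
  derivable g a v -> (\forall x \near a, g a <= g x) -> 'D_v g a = 0.
Proof.
move=> dg gmin.
have cont : (fun h : R => h *: v + a) @ 0 --> a.
  rewrite -[X in _ --> X](add0r a) -[X in X + a](scale0r v).
  apply: cvgD; last exact: cvg_cst.
  apply: cvgZ; [exact: cvg_id | exact: cvg_cst].
have gm : \forall h \near (0:R), g a <= g (h *: v + a) by exact: cont gmin.
move: gm => /nbhs_ballP [e e0 He].
apply/eqP; rewrite eq_le; apply/andP; split.
  rewrite /derive (cvg_at_leftE (fun h => h^-1 *: ((g \o shift a) (h *: v) - g a))) //.
  apply: limr_le.
    apply: (cvgP ('D_v g a)); apply: cvg_trans dg; apply: cvg_app.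
    move=> A [e1 egt0 Ae]; exists e1 => // x xe xgt0; apply: Ae => //.
    exact/ltr0_neq0.
  near=> h; apply: mulr_le0_ge0.
    by rewrite invr_le0; apply: ltW; near: h; exists 1 => /=.
  rewrite subr_ge0 /=; near: h; exists e => // y yb _; exact: He.
rewrite /derive (cvg_at_rightE (fun h => h^-1 *: ((g \o shift a) (h *: v) - g a))) //.
apply: limr_ge.
  apply: (cvgP ('D_v g a)); apply: cvg_trans dg; apply: cvg_app.
  move=> A [e1 egt0 Ae]; exists e1 => // x xe xgt0; apply: Ae => //.
  exact/lt0r_neq0.
near=> h; apply: mulr_ge0.
  by rewrite invr_ge0; apply: ltW; near: h; exists 1 => /=.
rewrite subr_ge0 /=; near: h; exists e => // y yb _; exact: He.
Unshelve. all: by end_near. Qed.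

From mathcomp Require Import lra.

Theorem lemma2p18 (R : realType) (n : nat) (X Y : set 'rV[R]_n)
  (c : 'rV[R]_n -> 'rV[R]_n -> R) :
  standing_setting X Y c ->
  forall (x' y0 y1 : 'rV[R]_n), X x' -> Y y0 -> Y y1 -> y0 <> y1 ->
  let f0 := fun x => - c x y0 + c x' y0 in
  let f1 := fun x => - c x y1 + c x' y1 in
  interior X x' ->
  interior [set x | X x /\ f0 x <= f1 x] !=set0.
Proof.
move=> ss x' y0 y1 Xx' Yy0 Yy1 neq f0 f1 ix'.
move: ss => [_ [_ [_ [_ [dif [_ [_ [_ [_ [_ [_ [twx _]]]]]]]]]]]].
apply: contrapT => Hne.
pose G := (fun t => c t y1) - (fun t => c t y0).
have Gmin : \forall x \near x', G x' <= G x.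
  have := nbhs_interior ix'; apply: filterS => x ix.
  rewrite leNgt; apply/negP => Gx.
  apply: Hne; exists x.
  have Xx : X x := nbhs_singleton ix.
  have [d0 _] := dif x y0 Xx Yy0; have [d1 _] := dif x y1 Xx Yy1.
  have c1 := differentiable_continuous d1.
  have c0 := differentiable_continuous d0.
  have cG : G @ x --> G x := @cvgB _ _ _ _ (nbhs_filter x) _ _ _ _ c1 c0.
  have nb : \forall z \near x, G z < G x' := cG _ (lt_nbhsl Gx).
  near=> z; split; first by near: z; exact: ix.
  have : G z < G x' by near: z; exact: nb.
  move=> H; have H2 : c z y1 - c z y0 < c x' y1 - c x' y0 := H; rewrite /f0 /f1; lra.
have [d0 _] := dif x' y0 Xx' Yy0; have [d1 _] := dif x' y1 Xx' Yy1.
apply: neq; apply: (twx x' y0 y1 Xx' Yy0 Yy1); congr (- _).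
apply/rowP => i; rewrite !mxE.
have := @fermat_min R _ G x' (ebas R i) (derivableB (diff_derivable d1) (diff_derivable d0)) Gmin.
rewrite deriveB; [|exact: diff_derivable|exact: diff_derivable].
by move/eqP; rewrite subr_eq0 => /eqP.
Unshelve. all: by end_near. Qed.
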